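(* Let $P=(p_1,\dots,p_n)$ be a configuration of length $n$. If there exist $i,j\in\{1,\dots,n\}$ such that $p_j=p_i+i$, then $P$ is not unique.
   Context: For a real sequence $A=(a_1,\dots,a_n)$, a configuration is a sequence $P=(p_1,\dots,p_n)$ with $p_\ell\in\{1,\dots,n-\ell+1\}$ for each $\ell$; $P$ is an output configuration for $A$ if for every $\ell=1,\dots,n$ the sum $a_{p_\ell}+\dots+a_{p_\ell+\ell-1}$ is maximum among all sums of $\ell$ consecutive entries of $A$. A configuration $P$ is unique if there exists $A\in\mathbb{R}^n$ whose only output configuration is $P$ (equivalently, for every $\ell$ the block of length $\ell$ starting at $p_\ell$ has sum strictly larger than every other block of length $\ell$). *)

(* Defs.v *)
From Stdlib Require Import Reals.
From HB Require Import structures.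
From mathcomp Require Import all_boot all_order all_algebra.
From mathcomp Require Import Rstruct.
Set Implicit Arguments. Unset Strict Implicit. Unset Printing Implicit Defensive.
Import Order.TTheory GRing.Theory Num.Theory.
Local Open Scope ring_scope.
Local Open Scope nat_scope.

(* A real sequence a_1..a_n is a function A : nat -> R (only indices 1..n used).
   A configuration P = (p_1..p_n) is a function P : nat -> nat (only 1..n used). *)

Definition block_sum (A : nat -> R) (p l : nat) : R :=
  \big[+%R/0%R]_(p <= k < p + l) A k.

Definition configuration (n : nat) (P : nat -> nat) : Prop :=
  forall l, 1 <= l <= n -> 1 <= P l <= n - l + 1.

Definition output_configuration (n : nat) (A : nat -> R) (P : nat -> nat) : Prop :=
  configuration n P /\
  forall l, 1 <= l <= n -> forall q, 1 <= q <= n - l + 1 ->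
    (block_sum A q l <= block_sum A (P l) l)%O.

Definition unique_configuration (n : nat) (P : nat -> nat) : Prop :=
  configuration n P /\
  exists A : nat -> R,
    output_configuration n A P /\
    forall Q, output_configuration n A Q -> forall l, 1 <= l <= n -> Q l = P l.

(* Main.v *)
Require Import Defs.
From mathcomp Require Import all_boot.
From Stdlib Require Import Reals.
From mathcomp Require Import all_order all_algebra Rstruct.
From mathcomp Require Import lra zify.
Import Order.TTheory GRing.Theory Num.Theory.

Lemma bs_split (A : nat -> R) p a b :
  block_sum A p (a + b) = (block_sum A p a + block_sum A (p + a) b)%R.
Proof.
rewrite /block_sum addnA (@big_cat_nat _ _ _ (p + a)) //; exact: leq_addr.
Qed.

Lemma strict_max n (P : nat -> nat) (A : nat -> R) :
  output_configuration n A P ->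
  (forall Q, output_configuration n A Q -> forall l, 1 <= l <= n -> Q l = P l) ->
  forall l, 1 <= l <= n -> forall q, 1 <= q <= n - l + 1 -> q != P l ->
  (block_sum A q l < block_sum A (P l) l)%R.
Proof.
move=> [cP mP] uP l hl q hq hne.
rewrite lt_neqAle mP // andbT.
apply/negP => /eqP heq.
pose Q k := if k == l then q else P k.
have oQ : output_configuration n A Q.
  split.
    move=> k hk; rewrite /Q; case: eqP => [->|_] //; exact: cP.
  move=> k hk r hr; rewrite /Q; case: (eqVneq k l) => [Ek|_]; last exact: mP.
  subst k; rewrite heq; exact: mP.
move: (uP Q oQ l hl); rewrite /Q eqxx => E.
by rewrite E eqxx in hne.
Qed.

Theorem proposition1 (n : nat) (P : nat -> nat) :
  configuration n P ->
  (exists i j, [/\ 1 <= i <= n, 1 <= j <= n & P j = P i + i]) ->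
  ~ unique_configuration n P.
Proof.
move=> cP [i [j [hi hj hPj]]] [_ [A [oA uA]]].
have [cPi cPj] := (cP i hi, cP j hj).
rewrite hPj in cPj.
have s1 : (block_sum A (P i) j < block_sum A (P j) j)%R.
  have := (@strict_max _ _ _ oA uA _ hj (P i)); apply; first lia.
  rewrite hPj; apply/negP => /eqP; lia.
have s2 : (block_sum A (P i + j) i < block_sum A (P i) i)%R.
  have := (@strict_max _ _ _ oA uA _ hi (P i + j)); apply; first lia.
  apply/negP => /eqP; lia.
have e1 := bs_split A (P i) i j.
have e2 := bs_split A (P i) j i.
rewrite addnC e1 -hPj in e2.
have h := ltrD s1 s2. rewrite -e2 (addrC (block_sum A (P j) j)) in h. by rewrite Order.POrderTheory.ltxx in h.
Qed.
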